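(* Let $\mathcal{D}$ be a distribution on $\mathbb{R}^d$, $f,h:\mathbb{R}^d\to\{0,1\}$ with $f$ a linear threshold function and $h$ a hypothesis, $q\ge2$, $k\in\{1,\dots,q-1\}$. Suppose $0<\mathrm{BagErr}_{\mathrm{oracle}}(h,f,\mathcal{D},q,k)\le\varepsilon'<1/(4q)$ and let $\varepsilon=4\varepsilon'$. Then (i) if $k\neq q/2$, $\Pr_{\mathbf{x}\sim\mathcal{D}}[f(\mathbf{x})\neq h(\mathbf{x})]\le\varepsilon$; and (ii) if $k=q/2$, $\Pr_{\mathbf{x}\sim\mathcal{D}}[f(\mathbf{x})\neq h(\mathbf{x})]\le\varepsilon$ or $\Pr_{\mathbf{x}\sim\mathcal{D}}[f(\mathbf{x})\neq1-h(\mathbf{x})]\le\varepsilon$.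
   Context: The bag oracle $\mathrm{Ex}(f,\mathcal{D},q,k)$ (defined for $1\le k\le q-1$, with both events $f=0,f=1$ of positive probability) returns a bag of $q$ independent points, $k$ drawn from $\mathcal{D}$ conditioned on $f=1$ and $q-k$ from $\mathcal{D}$ conditioned on $f=0$. $\mathrm{BagErr}_{\mathrm{oracle}}(h,f,\mathcal{D},q,k):=\Pr_{B\sim\mathrm{Ex}(f,\mathcal{D},q,k)}[\mathrm{Avg}\{h(\mathbf{x}):\mathbf{x}\in B\}\neq k/q]$. *)

(* Defs.v *)
From HB Require Import structures.
From mathcomp Require Import all_boot all_order all_algebra.
From mathcomp Require Import all_classical all_reals all_analysis.
Set Implicit Arguments. Unset Strict Implicit. Unset Printing Implicit Defensive.
Import Order.TTheory GRing.Theory Num.Theory.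
Import numFieldNormedType.Exports.
Local Open Scope classical_set_scope.
Local Open Scope ring_scope.

Definition Rd (R : realType) (d : nat) : measurableType _ :=
  g_sigma_algebraType (@open 'rV[R]_d).

Definition is_LTF (R : realType) (d : nat) (f : 'rV[R]_d -> bool) : Prop :=
  exists (w : 'rV[R]_d) (theta : R),
    forall x : 'rV[R]_d, f x = (theta <= \sum_(i < d) w ord0 i * x ord0 i).

Definition prD (R : realType) (d : nat) (D : probability (Rd R d) R)
  (A : set 'rV[R]_d) : R := fine (D A).

Definition condPr (R : realType) (d : nat) (D : probability (Rd R d) R)
  (f : 'rV[R]_d -> bool) (c : bool) (A : set 'rV[R]_d) : R :=
  prD D (A `&` [set x | f x = c]) / prD D [set x | f x = c].

(* BagErr_oracle(h,f,D,q,k): the bag B = (x_0,...,x_{q-1}) has independent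
   points, x_i ~ D|f=1 for i < k and x_i ~ D|f=0 for k <= i < q.  Since the
   event Avg{h(x) : x in B} <> k/q only depends on the vector of labels
   (h(x_0),...,h(x_{q-1})), its probability is the sum, over label vectors
   b with average <> k/q, of the product of the independent marginals
   Pr_{x_i}[h(x_i) = b_i]. *)
Definition BagErr_oracle (R : realType) (d : nat) (h f : 'rV[R]_d -> bool)
  (D : probability (Rd R d) R) (q k : nat) : R :=
  \sum_(b : {ffun 'I_q -> bool} |
          (\sum_(i < q) ((b i : nat)%:R : R)) / q%:R != k%:R / q%:R)
    \prod_(i < q) condPr D f (i < k)%N [set x | h x = b i].

(* Main.v *)
Require Import Defs.
From HB Require Import structures.
From mathcomp Require Import all_boot all_order all_algebra.
From mathcomp Require Import all_classical all_reals all_analysis.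
Import Order.TTheory GRing.Theory Num.Theory.
Import numFieldNormedType.Exports.
Local Open Scope classical_set_scope.
Local Open Scope ring_scope.
From mathcomp Require Import lra zify.

Lemma cont_sum (R : realType) (T : topologicalType) n (F : 'I_n -> T -> R) :
  (forall i, continuous (F i)) -> continuous (fun x => \sum_(i < n) F i x).
Proof.
elim: n F => [|n IH] F HF.
  have -> : (fun x => \sum_(i < 0) F i x) = fun=> 0 by apply/funext=> x; rewrite big_ord0.
  exact: cst_continuous.
have -> : (fun x => \sum_(i < n.+1) F i x) =
   (fun x => \sum_(i < n) F (widen_ord (leqnSn n) i) x) + F ord_max.
  by apply/funext=> x; rewrite big_ord_recr.
move=> x; apply: continuousD; last exact: HF.
by apply: IH => i; apply: HF.
Qed.

Lemma LTF_meas (R : realType) (d : nat) (f : 'rV[R]_d -> bool) (c : bool) :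
  is_LTF f -> measurable ([set x | f x = c] : set (Rd R d)).
Proof.
move=> [w [th Hf]].
have cl : closed [set x : 'rV[R]_d | f x = true].
  have -> : [set x : 'rV[R]_d | f x = true] =
      (fun x : 'rV[R]_d => \sum_(i < d) w ord0 i * x ord0 i) @^-1` [set y | th <= y].
    by apply/funext=> x; rewrite /preimage /= Hf; apply/propext; split => [->|->].
  apply: (proj1 (continuous_closedP _)); last exact: closed_ge.
  apply: cont_sum => i x; apply: continuousM; first exact: cst_continuous.
  exact: coord_continuous.
have mT : measurable ([set x | f x = true] : set (Rd R d)).
  rewrite -[X in measurable X]setCK.
  apply: measurableC; apply: sub_gen_smallest.
  exact: closed_openC.
case: c; first exact: mT.
have -> : [set x | f x = false] = ~` [set x | f x = true].
  by apply/funext=> x /=; apply/propext; case: (f x); split.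
exact: measurableC.
Qed.

Section Pr.
Variables (R : realType) (d : nat) (D : probability (Rd R d) R).

Lemma prD_ge0 A : 0 <= prD D A.
Proof. by apply: fine_ge0; apply: measure_ge0. Qed.

Lemma prD_U (A B : set (Rd R d)) : measurable A -> measurable B ->
  A `&` B = set0 -> prD D (A `|` B) = prD D A + prD D B.
Proof.
move=> mA mB AB; rewrite /prD measureU // fineD //; exact: fin_num_measure.
Qed.

Lemma prD_T : prD D setT = 1.
Proof. by rewrite /prD probability_setT. Qed.
End Pr.


Section Comb.
Variables (R : realFieldType) (q k : nat) (w : 'I_q -> bool -> R).
Hypothesis w0 : forall i v, 0 <= w i v.
Hypothesis w1 : forall i, w i true + w i false = 1.

Definition bM (b : {ffun 'I_q -> bool}) := \prod_(i < q) w i (b i).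
Definition bgood (b : {ffun 'I_q -> bool}) := (\sum_(i < q) (b i : nat))%N == k.

Lemma bM0 b : 0 <= bM b.
Proof. by apply: prodr_ge0 => i _. Qed.

Lemma bsumM : \sum_b bM b = 1.
Proof.
rewrite /bM -(bigA_distr_bigA (fun i (v : bool) => w i v)) /=.
by apply: big1 => i _; rewrite big_bool /= w1.
Qed.

Definition bflip (i : 'I_q) (b : {ffun 'I_q -> bool}) : {ffun 'I_q -> bool} :=
  [ffun j => if j == i then ~~ b j else b j].

Lemma bflipK i : involutive (bflip i).
Proof.
by move=> b; apply/ffunP=> j; rewrite !ffunE; case: eqP => // _; rewrite negbK.
Qed.

Definition bRm i b := \prod_(j < q | j != i) w j (b j).

Lemma bM_split i b : bM b = w i (b i) * bRm i b.
Proof. by rewrite /bM (bigD1 i). Qed.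

Lemma bM_flip i b : bM (bflip i b) = w i (~~ b i) * bRm i b.
Proof.
rewrite /bM (bigD1 i) //= ffunE eqxx; congr (_ * _).
by apply: eq_bigr => j /negbTE ji; rewrite ffunE ji.
Qed.

Lemma bgood_flip i b : bgood b -> ~~ bgood (bflip i b).
Proof.
rewrite /bgood.
rewrite [X in (X == k) -> _](bigD1 i) //= [X in ~~ (X == k)](bigD1 i) //= ffunE eqxx.
have -> : (\sum_(j < q | j != i) bflip i b j = \sum_(j < q | j != i) b j)%N.
  by apply: eq_bigr => j /negbTE ji; rewrite ffunE ji.
by move=> /eqP <-; case: (b i) => /=; rewrite eqn_add2r.
Qed.

Lemma key_A e : \sum_(b | ~~ bgood b) bM b <= e ->
  forall i, exists v, 1 - e <= w i v.
Proof.
move=> He i.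
have Hg : \sum_(b | bgood b) bM b = 1 - \sum_(b | ~~ bgood b) bM b.
  by rewrite -bsumM (bigID bgood predT) /= addrK.
set m := Num.max (w i true) (w i false).
have HR : \sum_(b | bgood b) bRm i b <= 1.
  have -> : \sum_(b | bgood b) bRm i b = \sum_(b | bgood b) bM b + \sum_(b | bgood b) bM (bflip i b).
    rewrite -big_split /=; apply: eq_bigr => b _.
    by rewrite (bM_split i) bM_flip -mulrDl; case: (b i) => /=; rewrite ?w1 ?mul1r // addrC w1 mul1r.
  have E : \sum_(b | bgood (bflip i b)) bM b = \sum_(b | bgood b) bM (bflip i b).
    rewrite (@reindex_inj _ _ _ _ (bflip i) (fun b => bgood (bflip i b)) bM (can_inj (bflipK i))) /=.
    by apply: eq_bigl => c; rewrite bflipK.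
  rewrite -E -bsumM.
  rewrite (big_mkcond bgood) [X in _ + X <= _](big_mkcond (fun b => bgood (bflip i b))) -big_split /=.
  apply: ler_sum => b _.
  case Gb: (bgood b); case Gf: (bgood (bflip i b)); rewrite ?addr0 ?add0r ?bM0 //.
  by move: (@bgood_flip i b Gb); rewrite Gf.
have Hm : \sum_(b | bgood b) bM b <= m.
  apply: (@le_trans _ _ (\sum_(b | bgood b) m * bRm i b)).
    apply: ler_sum => b _; rewrite (bM_split i); apply: ler_wpM2r.
      by apply: prodr_ge0.
    by rewrite /m; case: (b i); rewrite ?le_max ?lexx ?orbT.
  rewrite -mulr_sumr; rewrite -[X in _ <= X]mulr1; apply: ler_wpM2l => //.
  by rewrite /m le_max w0.
rewrite /m in Hm.
have : 1 - e <= m by move: He Hm; rewrite Hg /m; lra.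
by rewrite le_max => /orP [H|H]; [exists true|exists false].
Qed.


Lemma bern (e : R) n : 0 <= e <= 1 -> 1 - n%:R * e <= (1 - e) ^+ n.
Proof.
move=> /andP [e0 e1]; elim: n => [|n IH]; first by rewrite mul0r subr0 expr0.
rewrite exprS mulrSr.
have h1 : 0 <= 1 - e by lra.
have := ler_wpM2l h1 IH.
have : 0 <= n%:R * e * e by rewrite mulr_ge0 // mulr_ge0.
nra.
Qed.

Lemma key_B e (bs : {ffun 'I_q -> bool}) : (0 < q)%N ->
  0 <= e -> e * (4 * q%:R) < 1 -> ~~ bgood bs ->
  (forall i, 1 - e <= w i (bs i)) ->
  \sum_(b | ~~ bgood b) bM b <= e -> False.
Proof.
move=> q0 e0 e4 gb Hw He.
have q1 : 1 <= q%:R :> R by rewrite ler1n.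
have e1 : e <= 1 by nra.
have H1 : bM bs <= e.
  apply: le_trans He; rewrite (bigD1 bs) //= lerDl; apply: sumr_ge0 => b _; exact: bM0.
have H2 : (1 - e) ^+ q <= bM bs.
  rewrite -[q in X in X <= _]card_ord -prodr_const; apply: ler_prod => i _.
  by rewrite Hw andbT; lra.
have := @bern e q (introT andP (conj e0 e1)).
nra.
Qed.

End Comb.

Lemma sum_ifk (q k x y : nat) : (k <= q)%N ->
  (\sum_(i < q) (if (i < k)%N then x else y))%N = (k * x + (q - k) * y)%N.
Proof.
move=> kq.
rewrite -(big_mkord xpredT (fun i => if (i < k)%N then x else y)).
rewrite (@big_cat_nat _ _ _ k 0 q _ _ (leq0n k) kq) /=.
rewrite (@eq_big_nat _ _ _ 0 k _ (fun=> x)); last by move=> i /andP [_ ->].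
rewrite [X in (_ + X)%N](@eq_big_nat _ _ _ k q _ (fun=> y)); last first.
  by move=> i /andP [ki _]; rewrite ltnNge ki.
by rewrite !sum_nat_const_nat subn0 mulnC [((q - k) * y)%N]mulnC.
Qed.

Ltac setsolve :=
  let z := fresh "z" in
  apply/funext => z /=; apply/propext;
  repeat match goal with |- context [?g ?y] => is_var y;
    lazymatch type of (g y) with bool => case: (g y) end end;
  rewrite /=; split; intuition (try congruence; try discriminate).

Theorem theorem9 (R : realType) (d : nat) (D : probability (Rd R d) R)
  (f h : 'rV[R]_d -> bool) (q k : nat) (eps' : R) :
  is_LTF f ->
  measurable (h @^-1` [set true] : set (Rd R d)) ->
  (2 <= q)%N -> (1 <= k)%N -> (k <= q - 1)%N ->
  (0 < D [set x | f x = true])%E -> (0 < D [set x | f x = false])%E ->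
  0 < BagErr_oracle h f D q k ->
  BagErr_oracle h f D q k <= eps' ->
  eps' < 1 / (4 * q%:R) ->
  let eps := 4 * eps' in
  (k%:R != q%:R / 2 :> R ->
     prD D [set x | f x != h x] <= eps) /\
  (k%:R = q%:R / 2 :> R ->
     prD D [set x | f x != h x] <= eps \/
     prD D [set x | f x != ~~ h x] <= eps).
Proof.
move=> ltf mh q2 k1 kq fT fF B0 Be e4 eps.
have q0 : (0 < q)%N by apply: leq_trans q2.
have kq' : (k < q)%N by move: kq q2; clear; case: q => // q; rewrite subn1.
have mf : forall c, measurable ([set x | f x = c] : set (Rd R d)).
  by move=> c; exact: LTF_meas.
have mhv : forall v, measurable ([set x | h x = v] : set (Rd R d)).
  case; first exact: mh.
  have -> : [set x | h x = false] = ~` (h @^-1` [set true]) by setsolve.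
  exact: measurableC.
pose pc c := prD D [set x | f x = c].
pose a c v := prD D ([set x | h x = v] `&` [set x | f x = c]).
have pc0 : forall c, 0 < pc c.
  move=> c; rewrite /pc /prD; apply: fine_gt0; apply/andP; split.
    by case: c; [exact: fT | exact: fF].
  by rewrite ltey_eq (fin_num_measure D _ (mf c)).
have pc1 : pc true + pc false = 1.
  rewrite /pc -prD_U //; last by setsolve.
  by rewrite -(prD_T _ _ D); congr prD; setsolve.
have aS : forall c, a c true + a c false = pc c.
  move=> c; rewrite /a -prD_U; first by congr prD; setsolve.
  - by apply: measurableI.
  - by apply: measurableI.
  - by setsolve.
have a0 : forall c v, 0 <= a c v by move=> *; apply: prD_ge0.
have condE : forall c v, condPr D f c [set x | h x = v] = a c v / pc c by [].
pose w (i : 'I_q) v := condPr D f (i < k)%N [set x | h x = v].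
have w0 : forall i v, 0 <= w i v.
  by move=> i v; rewrite /w condE divr_ge0 // ltW.
have w1 : forall i, w i true + w i false = 1.
  by move=> i; rewrite /w !condE -mulrDl aS divff // gt_eqF.
have qnz : (q%:R : R) != 0 by rewrite pnatr_eq0 -lt0n.
have BE : BagErr_oracle h f D q k = \sum_(b | ~~ bgood q k b) bM _ q w b.
  rewrite /BagErr_oracle; apply: eq_bigl => b; rewrite /bgood.
  by rewrite -natr_sum (can_eq (divfK qnz)) eqr_nat.
have He : \sum_(b | ~~ bgood q k b) bM _ q w b <= eps' by rewrite -BE.
have e0 : 0 <= eps' by apply: le_trans Be; exact: ltW.
have HA : forall c, exists v, 1 - eps' <= condPr D f c [set x | h x = v].
  case.
    have [v Hv] := @key_A _ q k w w0 w1 eps' He (Ordinal q0).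
    by exists v; move: Hv; rewrite /w /= k1.
  have [v Hv] := @key_A _ q k w w0 w1 eps' He (Ordinal kq').
  by exists v; move: Hv; rewrite /w /= ltnn.
have [v1 H1] := HA true.
have [v0 H0] := HA false.
pose bs := [ffun i : 'I_q => if (i < k)%N then v1 else v0].
have sumbs : (\sum_(i < q) bs i)%N = (k * v1 + (q - k) * v0)%N.
  rewrite -(sum_ifk q k v1 v0 (ltnW kq')); apply: eq_bigr => i _.
  by rewrite ffunE; case: (i < k)%N.
have e4' : eps' * (4 * q%:R) < 1.
  by rewrite -ltr_pdivlMr // mulr_gt0 // ltr0n.
have contra : ~~ bgood q k bs -> False.
  move=> gb.
  have Hw : forall i, 1 - eps' <= w i (bs i).
    by move=> i; rewrite /w ffunE; case: (i < k)%N.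
  exact: (@key_B _ q k w w0 eps' bs q0 e0 e4' gb Hw He).
have Hgood : v1 = true -> v0 = false -> prD D [set x | f x != h x] <= eps.
  move=> ev1 ev0; rewrite ev1 ev0 !condE in H1 H0.
  rewrite ler_pdivlMr // in H1; rewrite ler_pdivlMr // in H0.
  have -> : [set x | f x != h x] =
    ([set x | h x = false] `&` [set x | f x = true]) `|`
    ([set x | h x = true] `&` [set x | f x = false]) by setsolve.
  rewrite prD_U; [|by apply: measurableI|by apply: measurableI|by setsolve].
  have := aS true; have := aS false; rewrite /eps.
  rewrite /a /pc in H1 H0 pc1 *.
  nra.
have Hflip : v1 = false -> v0 = true -> prD D [set x | f x != ~~ h x] <= eps.
  move=> ev1 ev0; rewrite ev1 ev0 !condE in H1 H0.
  rewrite ler_pdivlMr // in H1; rewrite ler_pdivlMr // in H0.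
  have -> : [set x | f x != ~~ h x] =
    ([set x | h x = true] `&` [set x | f x = true]) `|`
    ([set x | h x = false] `&` [set x | f x = false]) by setsolve.
  rewrite prD_U; [|by apply: measurableI|by apply: measurableI|by setsolve].
  have := aS true; have := aS false; rewrite /eps.
  rewrite /a /pc in H1 H0 pc1 *.
  nra.
have cases : (v1 = true /\ v0 = false) \/ (v1 = false /\ v0 = true /\ (q - k)%N = k).
  move: sumbs contra; rewrite /bgood.
  case E1: v1; case E0: v0 => /= -> contra.
  - exfalso; apply: contra; move: kq' k1; clear.
    by move=> kq1 _; rewrite !muln1 (subnKC (ltnW kq1)) (gtn_eqF kq1).
  - by left.
  - case: (eqVneq (q - k)%N k) => [E|E]; first by right.
    by exfalso; apply: contra; rewrite muln1 muln0 add0n.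
  - exfalso; apply: contra; move: k1; clear.
    by rewrite !muln0 addn0 eq_sym -lt0n.
split.
  move=> kne; case: cases => [[? ?]|[? [? E]]]; first exact: Hgood.
  exfalso; move/eqP: kne; apply.
  have qe : q = (k + k)%N by move: E kq'; clear; lia.
  by rewrite qe natrD; lra.
move=> _; case: cases => [[? ?]|[? [? E]]]; first by left; exact: Hgood.
by right; exact: Hflip.
Qed.
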